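(* Let $\phi:Z\to[-\infty,+\infty]$ be proper and closed, and suppose Assumptions (A1) and (A2) hold for some $\lambda\in\mathbb R$. Then for every $\tau\in(0,1/\lambda^-)$ the resolvent $J_\tau:\overline{D\phi}\to D\phi$ is continuous.
   Context: $(X,\mathsf d_X)$, $(Y,\mathsf d_Y)$ complete metric spaces; $Z=X\times Y$ with $\mathsf d_Z=(\mathsf d_X^2+\mathsf d_Y^2)^{1/2}$. $D_X\phi=\{x:\phi(x,y)<+\infty\ \forall y\}$, $D_Y\phi=\{y:\phi(x,y)>-\infty\ \forall x\}$, $D\phi=D_X\phi\times D_Y\phi$; proper: $D\phi\ne\emptyset$; closed: for $x\in D_X\phi$, $y\mapsto\phi(x,y)$ upper semicontinuous, for $y\in D_Y\phi$, $x\mapsto\phi(x,y)$ lower semicontinuous. (A1): $\phi=+\infty$ on $(X\setminus D_X\phi)\times D_Y\phi$, $\phi=-\infty$ on $D_X\phi\times(Y\setminus D_Y\phi)$. $\lambda^-=\max\{-\lambda,0\}$, $1/\lambda^-:=+\infty$ if $\lambda^-=0$. $\Phi_\tau(x,y;x',y')=\phi(x',y')+\frac1{2\tau}(\mathsf d_X^2(x',x)-\mathsf d_Y^2(y',y))$. $f$ on $Z$ is $\mu$-convex-concave along curves $\gamma,\sigma$ if for all $t\in[0,1]$: $f(\gamma_t,y)\le(1-t)f(\gamma_0,y)+tf(\gamma_1,y)-\frac\mu2t(1-t)\mathsf d_X^2(\gamma_0,\gamma_1)$ for all $y$ and $f(x,\sigma_t)\ge(1-t)f(x,\sigma_0)+tf(x,\sigma_1)+\frac\mu2t(1-t)\mathsf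 d_Y^2(\sigma_0,\sigma_1)$ for all $x$. (A2) for $\lambda$: for every $(x,y)\in Z$, $(x_0,y_0),(x_1,y_1)\in D\phi$ there are continuous curves $\gamma$ from $x_0$ to $x_1$, $\sigma$ from $y_0$ to $y_1$ such that for all $\tau\in(0,1/\lambda^-)$, $(x',y')\mapsto\Phi_\tau(x,y;x',y')$ is $(\tau^{-1}+\lambda)$-convex-concave along them. A saddle point of $g:Z\to[-\infty,\infty]$ is $(x^*,y^* )$ with $g(x^*,y)\le g(x^*,y^* )\le g(x,y^* )$ for all $(x,y)$. Resolvent: for $z\in Z$ and $\tau\in(0,1/\lambda^-)$, $J_\tau z$ is the saddle point of $z'\mapsto\Phi_\tau(z;z')$; under the stated assumptions it exists, is unique and lies in $D\phi$. *)

(* Defs.v *)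
From HB Require Import structures.
From mathcomp Require Import all_boot all_order all_algebra.
From mathcomp Require Import reals constructive_ereal.
Set Implicit Arguments. Unset Strict Implicit. Unset Printing Implicit Defensive.
Import Order.TTheory GRing.Theory Num.Theory.
Local Open Scope ring_scope.
Local Open Scope ereal_scope.

Section Defs.
Context {R : realType}.

Definition is_metric {X : Type} (d : X -> X -> R) : Prop :=
  (forall x y, (0 <= d x y)%R) /\
  (forall x y, d x y = 0%R <-> x = y) /\
  (forall x y, d x y = d y x) /\
  (forall x y z, (d x z <= d x y + d y z)%R).

Definition complete_metric {X : Type} (d : X -> X -> R) : Prop :=
  forall u : nat -> X,
    (forall e : R, (0 < e)%R -> exists N, forall m n, (N <= m)%N -> (N <= n)%N ->
        (d (u m) (u n) < e)%R) ->
    exists l, forall e : R, (0 < e)%R -> exists N, forall n, (N <= n)%N ->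
        (d (u n) l < e)%R.

Definition dZ {X Y : Type} (dX : X -> X -> R) (dY : Y -> Y -> R)
  (z z' : X * Y) : R :=
  Num.sqrt (dX z.1 z'.1 ^+ 2 + dY z.2 z'.2 ^+ 2)%R.

Definition DX {X Y : Type} (phi : X -> Y -> \bar R) (x : X) : Prop :=
  forall y, phi x y < +oo.
Definition DY {X Y : Type} (phi : X -> Y -> \bar R) (y : Y) : Prop :=
  forall x, -oo < phi x y.
Definition Dphi {X Y : Type} (phi : X -> Y -> \bar R) (z : X * Y) : Prop :=
  DX phi z.1 /\ DY phi z.2.

Definition proper_sf {X Y : Type} (phi : X -> Y -> \bar R) : Prop :=
  exists z, Dphi phi z.

Definition lsc {X : Type} (d : X -> X -> R) (f : X -> \bar R) : Prop :=
  forall x (a : R), a%:E < f x ->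
    exists del : R, (0 < del)%R /\ forall x', (d x x' < del)%R -> a%:E < f x'.
Definition usc {X : Type} (d : X -> X -> R) (f : X -> \bar R) : Prop :=
  forall x (a : R), f x < a%:E ->
    exists del : R, (0 < del)%R /\ forall x', (d x x' < del)%R -> f x' < a%:E.

Definition closed_sf {X Y : Type} (dX : X -> X -> R) (dY : Y -> Y -> R)
  (phi : X -> Y -> \bar R) : Prop :=
  (forall x, DX phi x -> usc dY (fun y => phi x y)) /\
  (forall y, DY phi y -> lsc dX (fun x => phi x y)).

Definition A1 {X Y : Type} (phi : X -> Y -> \bar R) : Prop :=
  (forall x y, ~ DX phi x -> DY phi y -> phi x y = +oo) /\
  (forall x y, DX phi x -> ~ DY phi y -> phi x y = -oo).

Definition lam_minus (lam : R) : R := Num.max (- lam)%R 0%R.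

(* tau in (0, 1/lambda^-), with 1/lambda^- = +oo when lambda^- = 0 *)
Definition tau_adm (lam tau : R) : Prop :=
  (0 < tau)%R /\ ((0 < lam_minus lam)%R -> (tau < 1 / lam_minus lam)%R).

Definition Phi {X Y : Type} (dX : X -> X -> R) (dY : Y -> Y -> R)
  (phi : X -> Y -> \bar R) (tau : R) (z : X * Y) (x' : X) (y' : Y) : \bar R :=
  phi x' y' + ((dX x' z.1 ^+ 2 - dY y' z.2 ^+ 2) / (2 * tau))%R%:E.

Definition curve_cont {X : Type} (d : X -> X -> R) (g : R -> X) : Prop :=
  forall t, (0 <= t <= 1)%R -> forall e : R, (0 < e)%R ->
    exists del : R, (0 < del)%R /\ forall s, (0 <= s <= 1)%R ->
      (`|s - t|%R < del)%R -> (d (g t) (g s) < e)%R.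

Definition cvx_ccv_along {X Y : Type} (dX : X -> X -> R) (dY : Y -> Y -> R)
  (f : X -> Y -> \bar R) (mu : R) (gam : R -> X) (sig : R -> Y) : Prop :=
  forall t, (0 <= t <= 1)%R ->
    (forall y, f (gam t) y <= (1 - t)%R%:E * f (gam 0%R) y + t%:E * f (gam 1%R) y
        - (mu / 2 * t * (1 - t) * dX (gam 0%R) (gam 1%R) ^+ 2)%R%:E) /\
    (forall x, f x (sig t) >= (1 - t)%R%:E * f x (sig 0%R) + t%:E * f x (sig 1%R)
        + (mu / 2 * t * (1 - t) * dY (sig 0%R) (sig 1%R) ^+ 2)%R%:E).

Definition A2 {X Y : Type} (dX : X -> X -> R) (dY : Y -> Y -> R)
  (phi : X -> Y -> \bar R) (lam : R) : Prop :=
  forall (z : X * Y) (x0 x1 : X) (y0 y1 : Y),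
    Dphi phi (x0, y0) -> Dphi phi (x1, y1) ->
    exists (gam : R -> X) (sig : R -> Y),
      curve_cont dX gam /\ gam 0%R = x0 /\ gam 1%R = x1 /\
      curve_cont dY sig /\ sig 0%R = y0 /\ sig 1%R = y1 /\
      forall tau, tau_adm lam tau ->
        cvx_ccv_along dX dY (Phi dX dY phi tau z) (tau^-1 + lam)%R gam sig.

Definition saddle_point {X Y : Type} (g : X -> Y -> \bar R) (z : X * Y) : Prop :=
  forall x y, g z.1 y <= g z.1 z.2 /\ g z.1 z.2 <= g x z.2.

Definition closureZ {X Y : Type} (dX : X -> X -> R) (dY : Y -> Y -> R)
  (S : X * Y -> Prop) (z : X * Y) : Prop :=
  forall e : R, (0 < e)%R -> exists s, S s /\ (dZ dX dY z s < e)%R.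

Definition cont_on {X Y : Type} (dX : X -> X -> R) (dY : Y -> Y -> R)
  (A : X * Y -> Prop) (F : X * Y -> X * Y) : Prop :=
  forall z, A z -> forall e : R, (0 < e)%R ->
    exists del : R, (0 < del)%R /\ forall z', A z' ->
      (dZ dX dY z z' < del)%R -> (dZ dX dY (F z) (F z') < e)%R.

End Defs.

(* Main.v *)
Require Import Defs.
From mathcomp Require Import all_boot all_order all_algebra.
From mathcomp Require Import reals constructive_ereal.
From mathcomp Require Import ring lra.
From Stdlib Require Import Classical.
Import Order.TTheory GRing.Theory Num.Theory.
Local Open Scope ring_scope.
Local Open Scope ereal_scope.

Section S.
Variables (R : realType) (X Y : Type).
Implicit Types (dX : X -> X -> R) (dY : Y -> Y -> R) (phi : X -> Y -> \bar R).

Lemma finE phi x y : DX phi x -> DY phi y -> phi x y = (fine (phi x y))%:E.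
Proof.
move=> hx hy; move: (hx y) (hy x); case: (phi x y) => //.
Qed.

Lemma saddle_D dX dY phi tau z w : proper_sf phi -> A1 phi ->
  saddle_point (Phi dX dY phi tau z) w -> Dphi phi w.
Proof.
case: w => a b [[x0 y0] [/= h0x h0y]] [A1a A1b] hs.
set g := Phi dX dY phi tau z.
have gP : forall x y c, phi x y = c -> (c = +oo \/ c = -oo) -> g x y = c.
  by move=> x y c e hc; rewrite /g /Phi e; case: hc => ->.
have gP' : forall x y, (g x y = +oo -> phi x y = +oo) /\ (g x y = -oo -> phi x y = -oo).
  move=> x y; rewrite /g /Phi; case: (phi x y) => [r||] /=; split => //.
have ptop : g a b = +oo -> False.
  move=> e; have := (hs x0 y0).2; rewrite /= -/g e leye_eq => /eqP /(proj1 (gP' _ _)) e2.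
  by move: (h0x b); rewrite e2.
have pbot : g a b = -oo -> False.
  move=> e; have := (hs x0 y0).1; rewrite /= -/g e leeNy_eq => /eqP /(proj2 (gP' _ _)) e2.
  by move: (h0y a); rewrite e2.
split => /=.
- apply: NNPP => na; case: (classic (DY phi b)) => hb.
    by apply: ptop; apply: gP; [exact: A1a|left].
  have e : g a y0 = +oo by apply: gP; [exact: A1a|left].
  apply: ptop; have := (hs x0 y0).1; rewrite /= -/g e leye_eq => /eqP //.
- apply: NNPP => nb; case: (classic (DX phi a)) => ha.
    by apply: pbot; apply: gP; [exact: A1b|right].
  have e : g x0 b = -oo by apply: gP; [exact: A1b|right].
  apply: pbot; have := (hs x0 y0).2; rewrite /= -/g e leeNy_eq => /eqP //.
Qed.

Lemma limt (A B : R) :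
  (forall t, (0 < t <= 1)%R -> (B * (1 - t) <= A)%R) -> (B <= A)%R.
Proof.
move=> h; have h1 := h 1%R; rewrite lexx ltr01 /= in h1.
have {}h1 : (0 <= A)%R by move: (h1 erefl); rewrite subrr mulr0.
case: (lerP B A) => // hAB.
have Bp : (0 < B)%R by lra.
have := h ((B - A) / (2 * B))%R.
have t0 : (0 < (B - A) / (2 * B))%R by apply: divr_gt0; lra.
have t1 : ((B - A) / (2 * B) <= 1)%R.
  rewrite ler_pdivrMr; lra.
rewrite t0 t1 => /(_ erefl).
have -> : (B * (1 - (B - A) / (2 * B)) = (A + B) / 2)%R.
  field; lra.
lra.
Qed.

Lemma divstep (t m B c c' : R) : (0 < t)%R ->
  (c <= (1 - t) * c + t * c' - m)%R -> m = (B * t * (1 - t))%R -> (B * (1 - t) <= c' - c)%R.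
Proof.
move=> t0 h hm; subst m.
have : (0 <= t * ((c' - c) - B * (1 - t)))%R by nra.
by rewrite pmulr_rge0 // subr_ge0.
Qed.

Definition P phi x y := fine (phi x y).
Definition q dX dY tau (z : X * Y) x y := ((dX x z.1 ^+ 2 - dY y z.2 ^+ 2) / (2 * tau))%R.

Lemma keyXY dX dY phi lam tau z a b a' b' :
  A2 dX dY phi lam -> tau_adm lam tau ->
  saddle_point (Phi dX dY phi tau z) (a, b) -> Dphi phi (a, b) -> Dphi phi (a', b') ->
  ((tau^-1 + lam) / 2 * dX a a' ^+ 2 <= (P phi a' b + q dX dY tau z a' b) - (P phi a b + q dX dY tau z a b))%R /\
  ((tau^-1 + lam) / 2 * dY b b' ^+ 2 <= (P phi a b + q dX dY tau z a b) - (P phi a b' + q dX dY tau z a b'))%R.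
Proof.
move=> hA2 htau hs [/= ha hb] [/= ha' hb'].
have gE : forall x y, DX phi x -> DY phi y -> Phi dX dY phi tau z x y = (P phi x y + q dX dY tau z x y)%:E.
  by move=> x y hx hy; rewrite /Phi (@finE phi x y hx hy).
have [gam [sig [_ [g0 [g1 [_ [s0 [s1 hc]]]]]]]] := hA2 z a a' b b' (conj ha hb) (conj ha' hb').
have {}hc := hc tau htau.
split; apply: limt => t /andP[t0 t1].
- have [h1 _] := hc t (andb_true_intro (conj (ltW t0) t1)).
  have := h1 b; rewrite g0 g1 (gE a b) // (gE a' b) // -!EFinM -!EFinD.
  have := (hs (gam t) b).2; rewrite /= (gE a b) // => hle1 hle2.
  have := le_trans hle1 hle2; rewrite lee_fin => h.
  by apply: (@divstep t _ _ _ _ t0 h); ring.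
- have [_ h2] := hc t (andb_true_intro (conj (ltW t0) t1)).
  have := h2 a; rewrite s0 s1 (gE a b) // (gE a b') // -!EFinM -!EFinD.
  have := (hs a (sig t)).1; rewrite /= (gE a b) // => hle1 hle2.
  have := le_trans hle2 hle1; rewrite lee_fin => h.
  have h' : (P phi a b' + q dX dY tau z a b' <= (1 - t) * (P phi a b' + q dX dY tau z a b') + t * (P phi a b + q dX dY tau z a b) - (tau^-1 + lam) / 2 * t * (1 - t) * dY b b' ^+ 2)%R.
    lra.
  by apply: (@divstep t _ _ _ _ t0 h'); ring.
Qed.

Lemma sqdiff (a b d : R) : (0 <= a -> 0 <= b -> 0 <= d ->
  a <= b + d -> b <= a + d -> a ^+ 2 - b ^+ 2 <= d * (2 * a + d) /\ a ^+ 2 - b ^+ 2 <= d * (2 * b + d))%R.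
Proof. move=> *; split; nra. Qed.

Lemma sqd (T : Type) (d : T -> T -> R) : is_metric d -> forall p u v,
  (d p u ^+ 2 - d p v ^+ 2 <= d u v * (2 * d p u + d u v) /\
   d p u ^+ 2 - d p v ^+ 2 <= d u v * (2 * d p v + d u v))%R.
Proof.
move=> [h0 [_ [hs ht]]] p u v; apply: sqdiff => //.
by rewrite -(hs v u); exact: ht.
Qed.

Lemma final (M K D d e : R) : (0 < M -> 0 <= K -> 0 <= D -> 0 <= d -> 0 < e ->
  M * D ^+ 2 <= 2 * d * (K + 1 + D) -> 2 * d <= M * e / 2 -> 2 * d * (K + 1) < M * e ^+ 2 / 2 -> D < e)%R.
Proof.
move=> *. case: (ltrP D e) => // hDe.
have : (M * e * D <= M * D ^+ 2)%R by rewrite expr2 mulrA ler_wpM2r // ler_wpM2l // ltW.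
have : (2 * d * D <= M * e / 2 * D)%R by rewrite ler_wpM2r.
nra.
Qed.

Lemma pb (u v a b : R) : (0 <= u -> u <= v -> v <= 1 -> 0 <= a -> a <= b ->
  u * (2 * a + u) <= v * (2 * b + 1))%R.
Proof. move=> *; nra. Qed.

Lemma mu_pos (lam tau : R) : tau_adm lam tau -> (0 < tau * (tau^-1 + lam))%R.
Proof.
move=> [t0 ht]; rewrite mulrDr mulfV ?gt_eqF //.
case: (lerP 0 lam) => hl.
  by have := mulr_ge0 (ltW t0) hl; lra.
have hm : lam_minus lam = (- lam)%R by rewrite /lam_minus max_l // ltW // oppr_gt0.
move: ht; rewrite hm oppr_gt0 hl => /(_ erefl).
rewrite ltr_pdivlMr ?oppr_gt0 //; lra.
Qed.

Lemma le_sqrt_l (a b : R) : (0 <= a -> a <= Num.sqrt (a ^+ 2 + b ^+ 2))%R.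
Proof.
move=> ha; rewrite -{1}(ger0_norm ha) -sqrtr_sqr; apply: ler_wsqrtr.
by rewrite lerDl sqr_ge0.
Qed.

Lemma le_sqrt_r (a b : R) : (0 <= b -> b <= Num.sqrt (a ^+ 2 + b ^+ 2))%R.
Proof. by move=> hb; rewrite addrC; apply: le_sqrt_l. Qed.

End S.

Theorem mainTheorem9 (R : realType) (X Y : Type)
  (dX : X -> X -> R) (dY : Y -> Y -> R) (phi : X -> Y -> \bar R) (lam : R) :
  is_metric dX -> complete_metric dX ->
  is_metric dY -> complete_metric dY ->
  proper_sf phi -> closed_sf dX dY phi ->
  A1 phi -> A2 dX dY phi lam ->
  forall tau : R, tau_adm lam tau ->
  forall J : X * Y -> X * Y,
    (forall z, closureZ dX dY (Dphi phi) z ->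
       saddle_point (Phi dX dY phi tau z) (J z)) ->
    cont_on dX dY (closureZ dX dY (Dphi phi)) J.
Proof.
move=> hmX _ hmY _ hprop _ hA1 hA2 tau htau J hJ [x1 y1] hz1 e e0.
have hs1 := hJ (x1, y1) hz1.
case E1 : (J (x1, y1)) hs1 => [a1 b1] hs1.
have Dw1 := @saddle_D _ _ _ _ _ _ _ _ _ hprop hA1 hs1.
have Mp := @mu_pos _ _ _ htau.
set M := (tau * (tau^-1 + lam))%R in Mp *.
have ME : M = (tau * (tau^-1 + lam))%R by [].
clearbody M.
have [dX0 [_ [dXs dXt]]] := hmX.
have [dY0 [_ [dYs dYt]]] := hmY.
set K := (dX a1 x1 + dY b1 y1)%R.
have K0 : (0 <= K)%R by rewrite addr_ge0.
exists (Num.min 1 (Num.min (M * e / 4) (M * e ^+ 2 / (4 * (K + 1)))))%R.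
split.
  rewrite !lt_min ltr01 /= !divr_gt0 ?mulr_gt0 ?exprn_gt0 //; lra.
move=> [x2 y2] hz2; rewrite !lt_min => /and3P [d1 d2 d3].
have hs2 := hJ (x2, y2) hz2.
case E2 : (J (x2, y2)) hs2 => [a2 b2] hs2.
have Dw2 := @saddle_D _ _ _ _ _ _ _ _ _ hprop hA1 hs2.
have [k1 k2] := @keyXY _ _ _ _ _ _ _ _ _ _ _ _ _ hA2 htau hs1 Dw1 Dw2.
have [k3 k4] := @keyXY _ _ _ _ _ _ _ _ _ _ _ _ _ hA2 htau hs2 Dw2 Dw1.
rewrite (dXs a2 a1) in k3; rewrite (dYs b2 b1) in k4.
have t0 : (0 < tau)%R by case: htau.
rewrite /q /= in k1 k2 k3 k4.
set S := (dX a1 a2 ^+ 2 + dY b1 b2 ^+ 2)%R.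
set T1 := (dX a2 x1 ^+ 2 - dX a2 x2 ^+ 2)%R.
set T2 := (dX a1 x2 ^+ 2 - dX a1 x1 ^+ 2)%R.
set T3 := (dY b1 y2 ^+ 2 - dY b1 y1 ^+ 2)%R.
set T4 := (dY b2 y1 ^+ 2 - dY b2 y2 ^+ 2)%R.
have hs : ((tau^-1 + lam) * S <= (T1 + T2 + T3 + T4) / (2 * tau))%R.
  rewrite /S /T1 /T2 /T3 /T4; lra.
have hM : (M * S <= (T1 + T2 + T3 + T4) / 2)%R.
  rewrite ME -mulrA.
  have := ler_wpM2l (ltW t0) hs.
  by rewrite (_ : (tau * ((T1 + T2 + T3 + T4) / (2 * tau)) = (T1 + T2 + T3 + T4) / 2)%R) //; field; lra.
set d := dZ dX dY (x1, y1) (x2, y2) in d1 d2 d3.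
have dx : (dX x1 x2 <= d)%R by apply: le_sqrt_l.
have dy : (dY y1 y2 <= d)%R by apply: le_sqrt_r.
set D := dZ dX dY (a1, b1) (a2, b2).
have DS : (D ^+ 2 = S)%R by rewrite /D /dZ sqr_sqrtr // addr_ge0 // sqr_ge0.
have DX : (dX a1 a2 <= D)%R by apply: le_sqrt_l.
have DY : (dY b1 b2 <= D)%R by apply: le_sqrt_r.
have D0 : (0 <= D)%R by apply: sqrtr_ge0.
have d0 : (0 <= d)%R by apply: sqrtr_ge0.
have [h1 _] := @sqd _ _ _ hmX a2 x1 x2.
have [_ h2] := @sqd _ _ _ hmX a1 x2 x1.
have [_ h3] := @sqd _ _ _ hmY b1 y2 y1.
have [h4 _] := @sqd _ _ _ hmY b2 y1 y2.
rewrite -/T1 in h1; rewrite -/T2 dXs in h2; rewrite -/T3 dYs in h3; rewrite -/T4 in h4.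
have e1 : (dX a2 x1 <= D + dX a1 x1)%R by apply: le_trans (dXt a2 a1 x1) _; rewrite lerD2r dXs.
have e4 : (dY b2 y1 <= D + dY b1 y1)%R by apply: le_trans (dYt b2 b1 y1) _; rewrite lerD2r dYs.
have p1 := @pb _ _ _ _ _ (dX0 x1 x2) dx (ltW d1) (dX0 a2 x1) e1.
have p2 := @pb _ _ _ _ _ (dX0 x1 x2) dx (ltW d1) (dX0 a1 x1) (lexx (dX a1 x1)).
have p3 := @pb _ _ _ _ _ (dY0 y1 y2) dy (ltW d1) (dY0 b1 y1) (lexx (dY b1 y1)).
have p4 := @pb _ _ _ _ _ (dY0 y1 y2) dy (ltW d1) (dY0 b2 y1) e4.
have hf : (M * D ^+ 2 <= 2 * d * (K + 1 + D))%R.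
  rewrite DS /K; lra.
apply: (@final _ _ _ _ _ _ Mp K0 D0 d0 e0 hf).
- lra.
- move: d3; rewrite ltr_pdivlMr; last lra.
  lra.
Qed.
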